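(* Let $A\in\mathbb{R}^{m\times n}$ with $\operatorname{rk}(A)=m$, $b\in\mathbb{R}^m$, $P=\{x\in\mathbb{R}^n: Ax=b,\ x\ge\mathbb{0}\}$. Let $B\subseteq[n]$ be a feasible basis, $N=[n]\setminus B$, $x^*=(A_B^{-1}b,\mathbb{0}_N)\in P$, and let $x^{(0)}$ be a vertex of $P$. Consider the following procedure: for $t=0,1,\dots$, while $x^{(t)}\ne x^*$, take a conformal circuit decomposition $x^*-x^{(t)}=\sum_{j=1}^k h^{(j)}$ with $k\le n-m$, choose $g^{(t)}=h^{(j)}$ for some $j$ maximizing $\|h^{(j)}_N\|_1$, and set $x^{(t+1)}=\operatorname{aug}_P(x^{(t)},g^{(t)})$. Define $L_t=\{i\in[n]: x^*_i>n\kappa_A\|x^{(t)}_N\|_1\}$ and $R_t=\{i\in[n]: x^{(t)}_i\le(n-m)x^*_i\}$. Then for every iteration $t\ge0$, $L_t\subseteq L_{t+1}\subseteq B$ and $R_t\subseteq R_{t+1}$.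
   Context: An elementary vector of $\ker(A)$ is a nonzero $g\in\ker(A)$ with inclusion-minimal support among nonzero vectors of $\ker(A)$; $\kappa_A=\max\{|g_i|/|g_j|: g \text{ elementary},\ i,j\in\mathrm{supp}(g)\}$. Vectors $x,y$ are sign-compatible if $x_iy_i\ge0$ for all $i$; $x\sqsubseteq y$ means they are sign-compatible and $|x_i|\le|y_i|$ for all $i$. A conformal circuit decomposition of $x\in\ker(A)$ is an expression $x=\sum_{j=1}^k h^{(j)}$ with each $h^{(j)}$ elementary and $h^{(j)}\sqsubseteq x$ (one with $k\le n-m$ always exists). For $x\in P$ and elementary $g$, $\operatorname{aug}_P(x,g)=x+\alpha g$ with $\alpha=\max\{\bar\alpha: x+\bar\alpha g\in P\}$. *)

(* Defs.v *)
From mathcomp Require Import all_boot all_order all_algebra.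
From mathcomp Require Import classical_sets reals.
Set Implicit Arguments.
Unset Strict Implicit.
Unset Printing Implicit Defensive.
Import Order.TTheory GRing.Theory Num.Theory.
Local Open Scope ring_scope.

Section Defs.
Variables (R : realType) (m n : nat).
Implicit Types (A : 'M[R]_(m, n)) (b : 'cV[R]_m) (x y g h : 'cV[R]_n).

Definition supp x : {set 'I_n} := [set i | x i 0 != 0].

Definition inP A b x : Prop := A *m x = b /\ forall i, 0 <= x i 0.

Definition vertex A b x : Prop :=
  inP A b x /\
  forall y z (lam : R), inP A b y -> inP A b z -> 0 < lam < 1 ->
    x = lam *: y + (1 - lam) *: z -> y = z.

Definition elementary A g : Prop :=
  A *m g = 0 /\ g != 0 /\
  forall h, A *m h = 0 -> h != 0 -> supp h \subset supp g -> supp h = supp g.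

(* kappa_A = max { |g_i|/|g_j| : g elementary, i,j in supp g }
   (the set is finite; its supremum is its maximum; 0 if ker A = 0) *)
Definition kappa A : R :=
  sup [set r : R | exists g, elementary A g /\
        exists i j, i \in supp g /\ j \in supp g /\ r = `|g i 0| / `|g j 0| ].

Definition conf_le x y : Prop :=
  forall i, 0 <= x i 0 * y i 0 /\ `|x i 0| <= `|y i 0|.

Definition conf_decomp A x (hs : seq 'cV[R]_n) (k : nat) : Prop :=
  x = \sum_(h <- hs) h /\ (size hs <= k)%N /\
  forall h, h \in hs -> elementary A h /\ conf_le h x.

Definition is_aug A b x g y : Prop :=
  exists alpha : R, y = x + alpha *: g /\ inP A b (x + alpha *: g) /\
    forall a : R, inP A b (x + a *: g) -> a <= alpha.

Definition normN1 (B : {set 'I_n}) x : R := \sum_(i in ~: B) `|x i 0|.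

Definition colsB A (B : {set 'I_n}) : 'M[R]_(m, #|B|) :=
  colsub (fun k : 'I_#|B| => enum_val k) A.

End Defs.

(* Main.v *)
Require Import Defs.
From mathcomp Require Import all_boot all_order all_algebra.
From mathcomp Require Import classical_sets reals.
From mathcomp Require Import lra boolp.
Import Order.TTheory GRing.Theory Num.Theory.
Local Open Scope ring_scope.

Lemma sup_ge0' (R : realType) (E : set R) : (forall r, E r -> 0 <= r) -> 0 <= sup E.
Proof.
move=> E0.
have [hs|hs] := pselect (has_sup E); last by rewrite sup_out.
case: (hs) => [[r Er] _].
apply: le_trans (E0 r Er) _; exact: (ub_le_sup hs.2) r Er.
Qed.

Lemma kappa_ge0 (R : realType) m n (A : 'M[R]_(m,n)) : 0 <= kappa A.
Proof.
apply: sup_ge0' => r [g [_ [i [j [_ [_ ->]]]]]]; by rewrite divr_ge0.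
Qed.

Lemma gN_nz (R : realType) m n (A : 'M[R]_(m,n)) (B : {set 'I_n}) (g : 'cV[R]_n) :
  #|B| = m -> \rank (colsB A B) = m -> A *m g = 0 -> g != 0 ->
  exists2 j, j \notin B & g j 0 != 0.
Proof.
move=> cB rB Ag gn0.
case: (pselect (exists2 j, j \notin B & g j 0 != 0)) => // H; exfalso.
have gB : forall j, j \notin B -> g j 0 = 0.
  by move=> j jB; case: (eqVneq (g j 0) 0) => // ?; case: H; exists j.
pose v : 'cV[R]_#|B| := \col_k g (enum_val k) 0.
have Cv : colsB A B *m v = 0.
  rewrite -Ag; apply/matrixP => r c; rewrite (ord1 c) !mxE.
  rewrite (bigID (fun j => j \in B)) /= [X in _ + X]big1 ?addr0; last first.
    by move=> j /gB ->; rewrite mulr0.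
  rewrite (big_enum_val (fun j => A r j * g j 0)).
  by apply: eq_bigr => k _; rewrite !mxE.
have v0 : v = 0.
  have rf : row_free (colsB A B)^T by rewrite /row_free mxrank_tr rB cB.
  apply: trmx_inj; apply/eqP; rewrite trmx0 -(mulmx_free_eq0 _ rf) -trmx_mul Cv trmx0.
  done.
move/negP: gn0; apply; apply/eqP/matrixP => j c; rewrite (ord1 c) mxE.
case: (boolP (j \in B)) => jB; last exact: gB.
have := congr1 (fun M : 'cV[R]_#|B| => M (enum_rank_in jB j) 0) v0.
by rewrite !mxE enum_rankK_in.
Qed.

Lemma sum_const_seq (R : realType) (T : Type) (s : seq T) (c : R) :
  \sum_(h <- s) c = c *+ size s.
Proof. by elim: s => [|h s IH]; rewrite ?big_nil ?big_cons ?IH ?mulrS. Qed.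

Theorem lemma3p2 (R : realType) (m n : nat)
  (A : 'M[R]_(m, n)) (b : 'cV[R]_m) (B : {set 'I_n}) (xs : 'cV[R]_n)
  (x g : nat -> 'cV[R]_n) :
  \rank A = m ->
  (* B is a basis: |B| = m and A_B is nonsingular *)
  #|B| = m -> \rank (colsB A B) = m ->
  (* x* = (A_B^{-1} b, 0_N), and x* in P (feasibility of B) *)
  (forall i, i \notin B -> xs i 0 = 0) -> A *m xs = b -> inP A b xs ->
  vertex A b (x 0%N) ->
  (* the procedure, for every iteration t reached (x^(s) <> x* for s <= t) *)
  (forall t : nat, (forall s, (s <= t)%N -> x s != xs) ->
     (exists hs : seq 'cV[R]_n,
        conf_decomp A (xs - x t) hs (n - m) /\ g t \in hs /\
        forall h, h \in hs -> normN1 B h <= normN1 B (g t)) /\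
     is_aug A b (x t) (g t) (x t.+1)) ->
  let L := fun t : nat =>
    [set i : 'I_n | n%:R * kappa A * normN1 B (x t) < xs i 0] in
  let Rt := fun t : nat =>
    [set i : 'I_n | x t i 0 <= (n - m)%:R * xs i 0] in
  forall t : nat, (forall s, (s <= t)%N -> x s != xs) ->
    (L t \subset L t.+1) && (L t.+1 \subset B) && (Rt t \subset Rt t.+1).
Proof.
move=> rA cB rB xsN Axs [_ xs0] vx proc L Rt t Ht.
have inPx : forall s, (s <= t)%N -> inP A b (x s).
  elim=> [|s IH] st; first exact: vx.1.
  have st' : (s <= t)%N by apply: ltnW.
  have [_ [al [-> [H _]]]] := proc s (fun s' hs' => Ht s' (leq_trans hs' st')).
  exact: H.
have [[hs [[dec [shs hsP]] [gin gmax]]] [al [Ye [[_ Y0'] almax]]]] := proc t Ht.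
have [AX X0] := inPx t (leqnn t).
set X := x t in dec X0 AX Ye almax *.
set G := g t in gin gmax Ye almax *.
have [[AG [Gn0 _]] conf] := hsP G gin.
have confi : forall i, 0 <= G i 0 * (xs i 0 - X i 0) /\ `|G i 0| <= `|xs i 0 - X i 0|.
  by move=> i; have := conf i; rewrite !mxE.
have al1 : 1 <= al.
  apply: almax; split.
    by rewrite scale1r mulmxDr AX AG addr0.
  move=> i; rewrite !mxE mul1r.
  have [c1 c2] := confi i; have := X0 i; have := xs0 i.
  case: (lerP 0 (G i 0)) => hg; first by move=> _ ?; apply: addr_ge0.
  rewrite ltr0_norm // in c2.
  case: (lerP 0 (xs i 0 - X i 0)) => hd.
    rewrite ger0_norm // in c2; nra.
  rewrite ltr0_norm // in c2; lra.
have Yi : forall i, x t.+1 i 0 = X i 0 + al * G i 0 by move=> i; rewrite Ye !mxE.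
have Y0 : forall i, 0 <= X i 0 + al * G i 0.
  by move=> i; have := Y0' i; rewrite !mxE.
have GN : forall j, j \notin B -> G j 0 <= 0.
  move=> j jB; have [c1 c2] := confi j; rewrite xsN // sub0r normrN in c1 c2.
  rewrite (ger0_norm (X0 j)) in c2.
  case: (lerP (G j 0) 0) => // hg; rewrite (gtr0_norm hg) in c2.
  have := X0 j; nra.
have al0 : 0 <= al by lra.
have nY : normN1 B (x t.+1) <= normN1 B X.
  apply: ler_sum => j; rewrite inE => jB; rewrite Yi.
  rewrite !ger0_norm ?Y0 ?X0 //; have := GN j jB; nra.
have nY0 : 0 <= normN1 B (x t.+1) by apply: sumr_ge0.
have nG0 : 0 < normN1 B G.
  have [j jB Gj] := @gN_nz R m n A B G cB rB AG Gn0.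
  rewrite /normN1 (bigD1 j) ?inE //=.
  apply: (@lt_le_trans _ _ `|G j 0|); first by rewrite normr_gt0.
  by rewrite lerDl; apply: sumr_ge0.
have alG : al * normN1 B G <= normN1 B X.
  rewrite /normN1 mulr_sumr; apply: ler_sum => j; rewrite inE => jB.
  have := GN j jB; have := Y0 j; have := X0 j.
  rewrite (ler0_norm (GN j jB)) (ger0_norm (X0 j)); nra.
have sz : (0 < size hs)%N by case: (hs) gin.
have XG : normN1 B X <= (size hs)%:R * normN1 B G.
  have -> : normN1 B X = normN1 B (xs - X).
    by apply: eq_bigr => j; rewrite inE => jB; rewrite !mxE xsN // sub0r normrN.
  rewrite dec /normN1.
  apply: (@le_trans _ _ (\sum_(j in ~: B) \sum_(h <- hs) `|h j 0|)).
    apply: ler_sum => j _; rewrite summxE; exact: ler_norm_sum.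
  rewrite exchange_big /=.
  apply: (@le_trans _ _ (\sum_(h <- hs) normN1 B G)).
    rewrite big_seq [X in _ <= X]big_seq; apply: ler_sum => h hin; exact: gmax.
  by rewrite sum_const_seq mulr_natl.
have K1 : (1 <= (n - m)%:R :> R) by rewrite ler1n; apply: leq_trans shs.
have KK : (size hs)%:R <= (n - m)%:R :> R by rewrite ler_nat.
have alK : al <= (n - m)%:R.
  have : al * normN1 B G <= (n - m)%:R * normN1 B G.
    apply: (le_trans alG); apply: (le_trans XG).
    by rewrite ler_wpM2r // ltW.
  by rewrite ler_pM2r.
have nk0 : 0 <= n%:R * kappa A by rewrite mulr_ge0 // kappa_ge0.
apply/andP; split; first (apply/andP; split).
- apply/fintype.subsetP => i; rewrite /L !inE => H.
  apply: le_lt_trans H; exact: ler_wpM2l.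
- apply/fintype.subsetP => i; rewrite /L !inE => H.
  apply/negPn/negP => iB; move: H; rewrite xsN //.
  by rewrite ltNge mulr_ge0.
- apply/fintype.subsetP => i; rewrite /Rt !inE.
  move: K1 alK; clear KK XG sz; move: ((n - m)%:R) => K K1 alK H.
  rewrite Yi; have [c1 c2] := confi i; have := X0 i.
  case: (lerP (G i 0) 0) => hg.
    move=> _; have : al * G i 0 <= 0 by nra.
    by move: H; rewrite -/X; lra.
  rewrite (gtr0_norm hg) in c2.
  have hd : 0 < xs i 0 - X i 0.
    case: (lerP (xs i 0 - X i 0) 0) => // hd.
    rewrite (ler0_norm hd) in c2; exfalso; clear -c1 c2 hg hd; nra.
  rewrite (gtr0_norm hd) in c2.
  move=> Xi; nra.
Qed.
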